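(* Every prime number that is antipalindromic in base $3$ can be written as $6k+1$ for some $k\in\mathbb N$.
   Context: For an integer $b\ge 2$, every natural number $m$ has a unique base-$b$ expansion $m=a_nb^n+\dots+a_1b+a_0$ with $a_0,\dots,a_n\in\{0,1,\dots,b-1\}$ and $a_n\neq 0$. The number $m$ is antipalindromic in base $b$ if $a_j=b-1-a_{n-j}$ for all $j\in\{0,1,\dots,n\}$. $\mathbb N$ denotes the positive integers. *)

(* Defs.v *)
From mathcomp Require Import all_boot.
Set Implicit Arguments. Unset Strict Implicit. Unset Printing Implicit Defensive.

(* Base-b digits of m, least significant first: [a_0; a_1; ...; a_n], a_n <> 0.
   digits b 0 = [::]. Uses fuel m (enough since m / b < m for b >= 2, m > 0). *)
Fixpoint digits_aux (b fuel m : nat) : seq nat :=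
  match fuel with
  | 0 => [::]
  | fuel'.+1 => if m == 0 then [::] else (m %% b) :: digits_aux b fuel' (m %/ b)
  end.

Definition digits (b m : nat) : seq nat := digits_aux b m m.

Definition antipalindromic (b m : nat) : Prop :=
  let d := digits b m in
  forall j, j < size d -> nth 0 d j = b.-1 - nth 0 d ((size d).-1 - j).

(* Main.v *)
Require Import Defs.
From mathcomp Require Import all_boot.
From mathcomp Require Import zify.

Lemma digits_aux0 b f : digits_aux b f 0 = [::].
Proof. by case: f. Qed.

Lemma digits_last f m : 0 < m -> m <= f ->
  0 < size (digits_aux 3 f m) /\ nth 0 (digits_aux 3 f m) (size (digits_aux 3 f m)).-1 != 0.
Proof.
elim: f m => [|f IH] m m0 mf; first by lia.
rewrite /=; have -> : (m == 0) = false by lia.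
case: (posnP (m %/ 3)) => [q0|qp].
  rewrite q0 digits_aux0 /=; split => //; lia.
have [s1 s2] := IH (m %/ 3) qp (ltac:(lia)).
split => //=.
by case: (digits_aux 3 f (m %/ 3)) s1 s2 => [|x r] //=.
Qed.

Theorem mainTheorem9 (p : nat) :
  prime p -> antipalindromic 3 p -> exists2 k : nat, 0 < k & p = 6 * k + 1.
Proof.
move=> pp ap.
have p1 := prime_gt1 pp.
have [s1 s2] := @digits_last p p (ltnW p1) (leqnn p).
have h0 := ap 0 s1.
have e0 : nth 0 (digits 3 p) 0 = p %% 3.
  by rewrite /digits; case: p {pp ap p1 s1 s2 h0} => [|p'] //=.
rewrite e0 subn0 in h0.
rewrite /digits /= in h0.
have hd : p %% 3 <= 1 by rewrite /= in h0; lia.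
have p2 : p != 2 by apply/eqP => E; subst p; move: hd; rewrite /=.
have podd : odd p.
  case: (boolP (odd p)) => // ev; case/primeP: pp => _ H.
  have : 2 %| p by by rewrite dvdn2.
  move/H => /orP [] // /eqP E; move/eqP: p2; lia.
case: (posnP (p %% 3)) => [m0|m1].
  have d3 : 3 %| p by rewrite /dvdn m0.
  case/primeP: pp => _ H; have := H 3 d3 => /orP [] // /eqP E3.
  by move: ap h0; rewrite -E3 /antipalindromic /digits /=.
exists (p %/ 6); lia.
Qed.
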